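(* Let $N,n$ be positive integers such that $r=N/n$ is a prime power, and let $0\le p\le 1$. Then $c(G(N,p),P_{n+1})\le r+1$.
   Context: $G(N,p)$ denotes the Erdős–Rényi random graph on vertex set $[N]$ in which each pair is an edge independently with probability $p$. $P_k$ denotes the path on $k$ vertices. For graphs $G,F$, $c(G,F)$ denotes the minimum number $k$ such that there exists a coloring of the edges of $G$ with $k$ colors containing no monochromatic copy of $F$. (Floor and ceiling issues in divisibility, e.g. of $N$ by $r^2$, are ignored.) *)

(* Defs.v *)
From HB Require Import structures.
From mathcomp Require Import all_boot all_order all_algebra.
Set Implicit Arguments. Unset Strict Implicit. Unset Printing Implicit Defensive.
Import Order.TTheory GRing.Theory Num.Theory.

(* A (simple) graph on vertex set [N] = 'I_N is given by its edge set
   E : {set {set 'I_N}}, a set of 2-element subsets of 'I_N. *)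

Definition pairs (N : nat) : {set {set 'I_N}} := [set e : {set 'I_N} | #|e| == 2].

(* The coloring f (with k colors, defined on all pairs; only its values on
   edges of E matter) admits a monochromatic copy of P_{n+1} in E:
   n+1 distinct vertices v_0,...,v_n with every {v_i, v_{i+1}} (i < n)
   an edge of E, all these edges receiving the same color c. *)
Definition mono_path (N : nat) (E : {set {set 'I_N}}) (n k : nat)
    (f : {ffun {set 'I_N} -> 'I_k}) : bool :=
  [exists v : {ffun 'I_n.+1 -> 'I_N},
    injectiveb v &&
    [exists c : 'I_k, [forall i : 'I_n,
       ([set v (widen_ord (leqnSn n) i); v (lift ord0 i)] \in E) &&
       (f [set v (widen_ord (leqnSn n) i); v (lift ord0 i)] == c)]]].

Definition good_coloring (N : nat) (E : {set {set 'I_N}}) (n k : nat) : bool :=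
  [exists f : {ffun {set 'I_N} -> 'I_k}, ~~ mono_path E n f].

(* c(G, P_{n+1}) <= m : the minimum number of colors of a coloring with no
   monochromatic P_{n+1} is at most m, i.e. some k <= m works. *)
Definition col_num_le (N : nat) (E : {set {set 'I_N}}) (n m : nat) : bool :=
  [exists k : 'I_m.+1, good_coloring E n k].

(* Probability of the graph with edge set E under G(N,p): each pair is an
   edge independently with probability p. *)
Definition gnp_prob (R : realFieldType) (N : nat) (p : R)
    (E : {set {set 'I_N}}) : R :=
  if E \subset pairs N then
    (\prod_(e in pairs N) (if e \in E then p else 1 - p))%R
  else 0%R.

(* Main.v *)
Require Import Defs.
From HB Require Import structures.
From mathcomp Require Import all_boot all_order all_algebra.
From mathcomp Require Import finfield.
From mathcomp Require Import zify ring.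
Import Order.TTheory GRing.Theory Num.Theory.

Section Comb.
Variable F : finFieldType.
Local Open Scope ring_scope.

Definition gg (o : option F) (P : F * F) : F :=
  match o with None => P.1 | Some m => P.2 - m * P.1 end.
Definition hh (o : option F) (P : F * F) : F :=
  match o with None => P.2 | Some _ => P.1 end.

Lemma gh_inj o P Q : gg o P = gg o Q -> hh o P = hh o Q -> P = Q.
Proof.
case: P Q => [x1 y1] [x2 y2]; case: o => [m|] /= H1 H2.
  by rewrite H2 in H1 *; move/addIr: H1 => ->.
by rewrite H1 H2.
Qed.

Lemma gg_exists P Q : exists o, gg o P = gg o Q.
Proof.
case: P Q => [x1 y1] [x2 y2].
have [->|ne] := eqVneq x1 x2; first by exists None.
exists (Some ((y2 - y1) / (x2 - x1))) => /=.
have d0 : x2 - x1 != 0 by rewrite subr_eq0 eq_sym.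
apply/eqP; rewrite -subr_eq0.
have -> : y1 - (y2 - y1) / (x2 - x1) * x1 - (y2 - (y2 - y1) / (x2 - x1) * x2)
   = (y2 - y1) / (x2 - x1) * (x2 - x1) - (y2 - y1) by ring.
by rewrite divfK // subrr.
Qed.

Variables (N n s : nat).
Hypothesis s_pos : (0 < s)%N.
Hypothesis hN : N = (#|F| * #|F| * s)%N.
Hypothesis hn : n = (#|F| * s)%N.

Definition pts := enum {: F * F}.
Definition pi (v : 'I_N) : F * F := nth (0, 0) pts (v %/ s).

Definition fcol : {ffun {set 'I_N} -> 'I_#|{: option F}|} :=
  [ffun e : {set 'I_N} => odflt (enum_rank (None : option F))
     [pick c : 'I_#|{: option F}| | [forall u in e, forall w in e,
        gg (enum_val c) (pi u) == gg (enum_val c) (pi w)]]].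

Lemma edge_ok a b c : fcol [set a; b] = c ->
  gg (enum_val c) (pi a) = gg (enum_val c) (pi b).
Proof.
rewrite ffunE; case: pickP => [c' Hc'|Hnone] /=.
  move=> <-; move/forall_inP: Hc' => /(_ a); rewrite in_set2 eqxx => /(_ isT).
  by move/forall_inP => /(_ b); rewrite in_set2 eqxx orbT => /(_ isT) /eqP.
have [o Ho] := gg_exists (pi a) (pi b).
have := Hnone (enum_rank o); rewrite enum_rankK.
suff -> : [forall u in [set a; b], forall w in [set a; b],
    gg o (pi u) == gg o (pi w)] by [].
apply/forall_inP => u; rewrite in_set2 => /orP[]/eqP->;
  apply/forall_inP => w; rewrite in_set2 => /orP[]/eqP->; by rewrite ?Ho.
Qed.

Lemma pi_div (u w : 'I_N) : pi u = pi w -> (u %/ s = w %/ s)%N.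
Proof.
have sz : size pts = (#|F| * #|F|)%N by rewrite /pts -cardE card_prod.
have lt (x : 'I_N) : (x %/ s < size pts)%N.
  by rewrite sz ltn_divLR // -hN ltn_ord.
rewrite /pi => H.
have := index_uniq (0, 0) (lt u) (enum_uniq _).
have := index_uniq (0, 0) (lt w) (enum_uniq _).
by rewrite /pts -/pts H => -> ->.
Qed.

Lemma no_mono E : ~~ Defs.mono_path E n fcol.
Proof.
apply/negP => /existsP [v /andP [/injectiveP injv /existsP [c /forallP Hc]]].
set b := gg (enum_val c) (pi (v ord0)).
have step : forall m, (m <= n)%N -> gg (enum_val c) (pi (v (inord m))) = b.
  elim => [_|m IH Hm].
    by congr (gg _ (pi (v _))); apply: val_inj; rewrite /= inordK.
  have Hm' : (m < n)%N by [].
  have := Hc (Ordinal Hm') => /andP [_ /eqP /edge_ok].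
  have -> : widen_ord (leqnSn n) (Ordinal Hm') = inord m.
    by apply: val_inj; rewrite /= inordK // ltnS ltnW.
  have -> : lift ord0 (Ordinal Hm') = inord m.+1.
    by apply: val_inj; rewrite /= inordK.
  by move=> <-; apply: IH; rewrite ltnW.
have allb : forall i : 'I_n.+1, gg (enum_val c) (pi (v i)) = b.
  by move=> i; rewrite -(inord_val i); apply: step; rewrite -ltnS.
pose phi (i : 'I_n.+1) : F * 'I_s :=
  (hh (enum_val c) (pi (v i)), Ordinal (ltn_pmod (v i) s_pos)).
have phi_inj : injective phi.
  move=> i j [] Hh Hmod.
  have Hp : pi (v i) = pi (v j) by apply: gh_inj Hh; rewrite !allb.
  apply: injv; apply: ord_inj.
  by rewrite (divn_eq (v i) s) (divn_eq (v j) s) (pi_div _ _ Hp) Hmod.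
have := leq_card phi phi_inj.
by rewrite card_ord card_prod card_ord -hn ltnn.
Qed.

Lemma good (E : {set {set (ordinal N)}}) : good_coloring E n #|{: option F}|.
Proof. by apply/existsP; exists fcol; apply: no_mono. Qed.

End Comb.

Lemma gnp_sum (R : realFieldType) (N : nat) (p : R) :
  (\sum_(E : {set {set 'I_N}}) gnp_prob p E = 1)%R.
Proof.
pose Fv (e : {set 'I_N}) : R := if e \in pairs N then p else 0%R.
pose Gv (e : {set 'I_N}) : R := if e \in pairs N then (1 - p)%R else 1%R.
have HG J : gnp_prob p J =
   (\prod_i (if i \in J then Fv i else Gv i))%R.
  rewrite /gnp_prob; case: ifP => sub.
    rewrite [RHS](bigID (mem (pairs N))) /= [X in (_ * X)%R]big1 ?mulr1.
      by apply: eq_bigr => i Hi; rewrite /Fv /Gv Hi.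
    move=> i Hi; have Ji : i \notin J := contraNN (@subsetP _ _ _ sub i) Hi.
    by rewrite (negPf Ji) /Gv (negPf Hi).
  have [i Hi Ji] : exists2 i, i \notin pairs N & i \in J.
    by move/negbT: sub => /subsetPn [i Ji Hi]; exists i.
  by rewrite (bigD1 i) //= Ji /Fv (negPf Hi) mul0r.
under eq_bigr do rewrite HG.
rewrite -(@bigA_distr R 0%R 1%R *%R +%R _ Fv Gv) /=.
by apply: big1 => i _; rewrite /Fv /Gv; case: ifP => _; [rewrite addrC subrK | rewrite add0r].
Qed.

Theorem theorem5p2 (R : realFieldType) (N n r q k : nat) (p : R) :
  (0 < N)%N -> (0 < n)%N -> N = (r * n)%N ->
  prime q -> (0 < k)%N -> r = (q ^ k)%N ->
  (r ^ 2 %| N)%N ->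
  (0 <= p)%R -> (p <= 1)%R ->
  (\sum_(E : {set {set 'I_N}} | col_num_le E n r.+1) gnp_prob p E = 1)%R.
Proof.
move=> N0 n0 hNr pq k0 hr dvd _ _.
have [Fm _ cardF] := pPrimePowerField pq k0.
rewrite -hr in cardF.
set s := (N %/ r ^ 2)%N.
have hN : N = (#|Fm| * #|Fm| * s)%N.
  by rewrite cardF mulnn /s mulnC divnK.
have r0 : (0 < r)%N by rewrite hr expn_gt0 prime_gt0.
have s0 : (0 < s)%N by move: N0; rewrite hN; case: (s) => //; rewrite muln0.
have hn : n = (#|Fm| * s)%N.
  apply/eqP; rewrite -(eqn_pmul2l r0) -hNr hN cardF mulnA //.
rewrite -(gnp_sum _ N p); apply: eq_bigl => E.
apply/existsP.
have lt : (#|{: option Fm}| < r.+2)%N by rewrite card_option cardF.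
exists (Ordinal lt).
exact: (@good Fm N n s s0 hN hn E).
Qed.
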